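(* Let $\mathrm{SG}(n)$ denote the Sprague--Grundy value of a pile of $n$ tokens in the game $i\textsc{-Mark}(\{1\},\{2,3\})$. For every integer $n>1$ there exists an integer $i$ with $1\le i\le 10$ and $i\le n$ such that $\mathrm{SG}(n-i)=1$.
   Context: In the impartial game $i\textsc{-Mark}(\{1\},\{2,3\})$, played on a single pile of $n\ge0$ tokens, a move replaces $n$ by $n-1$ (if $n\ge 1$), or by $n/2$ if $n>0$ is even, or by $n/3$ if $n>0$ is divisible by $3$. The Sprague--Grundy value is defined recursively by $\mathrm{SG}(n)=\mathrm{mex}\{\mathrm{SG}(w): w \text{ an option of } n\}$, where $\mathrm{mex}(T)$ is the smallest nonnegative integer not in $T$. *)

(* Defs.v *)
From mathcomp Require Import all_boot.
Set Implicit Arguments. Unset Strict Implicit. Unset Printing Implicit Defensive.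

Definition mex (T : seq nat) : nat := find (fun k => k \notin T) (iota 0 (size T).+1).

Definition options (n : nat) : seq nat :=
  (if 0 < n then [:: n.-1] else [::]) ++
  (if (0 < n) && (2 %| n) then [:: n %/ 2] else [::]) ++
  (if (0 < n) && (3 %| n) then [:: n %/ 3] else [::]).

(* Sprague-Grundy recursion with fuel; every option of n is < n,
   so fuel n.+1 suffices for the exact value. *)
Fixpoint sg_fuel (fuel n : nat) : nat :=
  match fuel with
  | 0 => 0
  | f.+1 => mex (map (sg_fuel f) (options n))
  end.

Definition SG (n : nat) : nat := sg_fuel n.+1 n.

(* Main.v *)
Require Import Defs.
From mathcomp Require Import all_boot.
From mathcomp Require Import zify.

Lemma options_lt n o : o \in options n -> o < n.
Proof.
rewrite /options !mem_cat.
case: (posnP n) => [->|n0] //=.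
rewrite !inE.
case/orP=> [/eqP->|]; first by lia.
case/orP; case: ifP => // _; rewrite inE => /eqP->; lia.
Qed.

Lemma sg_fuel_stable f : forall n, n < f -> sg_fuel f n = SG n.
Proof.
elim/ltn_ind: f => f IH n nf.
case: f IH nf => [|g] IH nf //=.
rewrite /SG /=.
congr mex; apply/eq_in_map => o /options_lt on.
rewrite (IH g) // ?(IH n) //; lia.
Qed.

Lemma SG_rec n : SG n = mex (map SG (options n)).
Proof.
rewrite {1}/SG /=; congr mex; apply/eq_in_map => o /options_lt on.
by rewrite sg_fuel_stable.
Qed.

Lemma mex_in1 T : 1 \in T -> mex T != 1.
Proof.
move=> H1; apply/eqP => E.
have [hs|hs] := boolP (has (fun k => k \notin T) (iota 0 (size T).+1)).
  have := nth_find 0 hs; rewrite -/(mex T) E nth_iota.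
    by rewrite add0n H1.
  by case: T H1 {E hs}.
move: hs; rewrite has_find -/(mex T) E size_iota.
by case: T H1 {E}.
Qed.

Lemma mex1 x : mex [:: x] != 1 -> x != 0.
Proof. by case: x. Qed.

Lemma mex1' x : mex [:: x] != 1 -> mex [:: x] = 0.
Proof. by case: x => [|[|x]]. Qed.

Lemma mex2 x y : x != 1 -> mex [:: x; y] != 1 -> mex [:: x; y] != 0 -> y = 1.
Proof. by case: x => [|[|x]] //; case: y => [|[|y]]. Qed.

Lemma mex2' y : mex [:: 0; y] != 1 -> y = 1.
Proof. by case: y => [|[|y]]. Qed.

Theorem mainTheorem5 (n : nat) : 1 < n ->
  exists i : nat, [/\ 1 <= i, i <= 10, i <= n & SG (n - i) = 1].
Proof.
move=> n1.
case: (leqP n 11) => hn.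
  exists n.-1; split; try lia.
  by have -> : n - n.-1 = 1 by lia.
have [/hasP [i]|hn0] := boolP (has (fun i => SG (n - i) == 1) (iota 1 10)).
  rewrite mem_iota => hi /eqP h; exists i; split => //; lia.
exfalso.
have Hw : forall x, n - 10 <= x < n -> SG x != 1.
  move=> x hx; apply/negP => /eqP hx1; move/hasP: hn0; apply.
  exists (n - x); first by rewrite mem_iota; lia.
  have -> : n - (n - x) = x by lia.
  by rewrite hx1.
pose t := (n - 6) %/ 6.
have ht1 : n - 11 <= 6 * t by rewrite /t; lia.
have ht2 : 6 * t + 6 <= n by rewrite /t; lia.
have ht0 : 0 < t by rewrite /t; lia.
have E1 : options (6*t+1) = [:: 6*t].
  rewrite /options.
  have -> : (0 < 6*t+1) && (2 %| 6*t+1) = false by apply/negP => /andP[_]; lia.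
  have -> : (0 < 6*t+1) && (3 %| 6*t+1) = false by apply/negP => /andP[_]; lia.
  by rewrite addn1.
have E2 : options (6*t+2) = [:: 6*t+1; 3*t+1].
  rewrite /options.
  have -> : (0 < 6*t+2) && (2 %| 6*t+2) = true by apply/andP; split; lia.
  have -> : (0 < 6*t+2) && (3 %| 6*t+2) = false by apply/negP => /andP[_]; lia.
  have -> : (6*t+2) %/ 2 = 3*t+1 by lia.
  by rewrite !addn2 !addn1.
have E4 : options (6*t+4) = [:: 6*t+3; 3*t+2].
  rewrite /options.
  have -> : (0 < 6*t+4) && (2 %| 6*t+4) = true by apply/andP; split; lia.
  have -> : (0 < 6*t+4) && (3 %| 6*t+4) = false by apply/negP => /andP[_]; lia.
  have -> : (6*t+4) %/ 2 = 3*t+2 by lia.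
  by rewrite addn4 /= -addn3.
have E5 : options (6*t+5) = [:: 6*t+4].
  rewrite /options.
  have -> : (0 < 6*t+5) && (2 %| 6*t+5) = false by apply/negP => /andP[_]; lia.
  have -> : (0 < 6*t+5) && (3 %| 6*t+5) = false by apply/negP => /andP[_]; lia.
  by rewrite (_ : 6*t+5 = (6*t+4).+1) ?addnS.

have E3 : (3*t+1) \in options (3*t+2).
  rewrite /options mem_cat (_ : 3*t+2 = (3*t+1).+1) ?addnS //=.
  by rewrite inE eqxx.
have w1 : SG (6*t+1) != 1 by apply: Hw; lia.
have w2 : SG (6*t+2) != 1 by apply: Hw; lia.
have w3 : SG (6*t+3) != 1 by apply: Hw; lia.
have w4 : SG (6*t+4) != 1 by apply: Hw; lia.
have w5 : SG (6*t+5) != 1 by apply: Hw; lia.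
have s1 : SG (6*t+1) = 0 by move: w1; rewrite SG_rec E1 /=; apply: mex1'.
have k1 : SG (3*t+1) = 1.
  by move: w2; rewrite SG_rec E2 /= s1; apply: mex2'.
have s4 : SG (6*t+4) != 0.
  by move: w5; rewrite SG_rec E5 /=; apply: mex1.
have k2 : SG (3*t+2) = 1.
  move: w4 s4; rewrite SG_rec E4 /=; exact: mex2.
have hin : 1 \in map SG (options (3*t+2)) by apply/mapP; exists (3*t+1).
by have := @mex_in1 _ hin; rewrite -SG_rec k2.
Qed.
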